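(* Let $\mathsf{A}=(A_1,\dots,A_N)\in GL_2(\mathbb{R})^N$ be dominated and reducible, with $\|A_i\|<1$ for all $i$, such that $X_F$ is not a singleton. Then, after possibly a change of basis, $$A_i=\begin{pmatrix}a_i&b_i\\0&d_i\end{pmatrix}\quad\text{with }0<|d_i|<|a_i|<1\text{ for all }i\in\{1,\dots,N\},$$ and the matrices $A_1,\dots,A_N$ are not simultaneously diagonalizable.
   Context: For a finite word $\mathtt{i}=i_1\cdots i_n$, $A_{\mathtt{i}}=A_{i_1}\cdots A_{i_n}$, $|\mathtt{i}|=n$; $\Sigma_*$ is the set of finite words. Dominated: $\exists C>0,0<\tau<1$ with $\alpha_2(A_{\mathtt{i}})\le C\tau^{|\mathtt{i}|}\alpha_1(A_{\mathtt{i}})$ for all $\mathtt{i}\in\Sigma_*$, where $\alpha_1\ge\alpha_2$ are singular values. Reducible: some line through the origin is invariant under all $A_i$. Furstenberg directions: $X_F=\{A\mathbb{R}^2: A$ rank-one matrix in the closure of $\{cA_{i_1}^{-1}\cdots A_{i_n}^{-1}: c\in\mathbb{R}, i_1\cdots i_n\in\Sigma_*\}\}$. *)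

(* Defs.v *)
From HB Require Import structures.
From mathcomp Require Import all_boot all_order all_algebra.
From mathcomp Require Import all_classical all_reals all_analysis.
Set Implicit Arguments. Unset Strict Implicit. Unset Printing Implicit Defensive.
Import Order.TTheory GRing.Theory Num.Theory numFieldNormedType.Exports.
Local Open Scope ring_scope.
Local Open Scope classical_set_scope.

Definition i0 : 'I_2 := ord0.
Definition i1 : 'I_2 := ord_max.

Section Defs.
Variable R : realType.

Definition vnorm (x : 'cV[R]_2) : R := Num.sqrt (x i0 ord0 ^+ 2 + x i1 ord0 ^+ 2).

Definition opnorm (A : 'M[R]_2) : R :=
  sup [set vnorm (A *m x) | x in [set x : 'cV[R]_2 | vnorm x = 1]].

(* Singular values alpha_1 >= alpha_2 of a 2x2 matrix: square roots of the
   two eigenvalues of A^T A, i.e. of the roots of X^2 - tr(A^T A) X + det(A)^2. *)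
Definition sv_disc (A : 'M[R]_2) : R :=
  Num.sqrt (\tr (A^T *m A) ^+ 2 - 4 * (\det A) ^+ 2).
Definition sv1 (A : 'M[R]_2) : R := Num.sqrt ((\tr (A^T *m A) + sv_disc A) / 2).
Definition sv2 (A : 'M[R]_2) : R := Num.sqrt ((\tr (A^T *m A) - sv_disc A) / 2).

Variable N : nat.

Definition word_prod (A : 'I_N -> 'M[R]_2) (w : seq 'I_N) : 'M[R]_2 :=
  \prod_(i <- w) A i.

Definition dominated (A : 'I_N -> 'M[R]_2) : Prop :=
  exists (C tau : R), 0 < C /\ 0 < tau < 1 /\
    forall w : seq 'I_N,
      sv2 (word_prod A w) <= C * tau ^+ size w * sv1 (word_prod A w).

Definition reducible (A : 'I_N -> 'M[R]_2) : Prop :=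
  exists v : 'cV[R]_2, v != 0 /\ forall i, exists l : R, A i *m v = l *: v.

Definition furst_set (A : 'I_N -> 'M[R]_2) : set 'M[R]_2 :=
  [set M | exists (c : R) (w : seq 'I_N), M = c *: \prod_(i <- w) invmx (A i)].

(* X_F: the set of lines M R^2 (column spaces, represented canonically by
   <<M^T>>%MS, the row space of M^T) for rank-one M in the closure. *)
Definition XF (A : 'I_N -> 'M[R]_2) : set 'M[R]_2 :=
  [set L | exists M : 'M[R]_2,
     closure (furst_set A) M /\ \rank M = 1%N /\ L = (<< M^T >>)%MS].

End Defs.

(* Main.v *)
Require Import Defs.
From HB Require Import structures.
From mathcomp Require Import all_boot all_order all_algebra.
From mathcomp Require Import all_classical all_reals all_analysis.
From mathcomp Require Import ring lra.
Import Order.TTheory GRing.Theory Num.Theory numFieldNormedType.Exports.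
Local Open Scope ring_scope.
Local Open Scope classical_set_scope.
Section S.
Variable R : realType.
Implicit Types A B M : 'M[R]_2.

Lemma i2_cases (i : 'I_2) : i = i0 \/ i = i1.
Proof. case: i => [[|[|k]]] Hk. by left; apply/val_inj. by right; apply/val_inj. by []. Qed.

Lemma mulE m n (A : 'M[R]_(m,2)) (B : 'M[R]_(2,n)) i j :
  (A *m B) i j = A i i0 * B i0 j + A i i1 * B i1 j.
Proof. rewrite mxE big_ord_recr big_ord1 /=. by congr (A i _ * B _ j + _); apply/val_inj. Qed.

Lemma mx2P A B : A i0 i0 = B i0 i0 -> A i0 i1 = B i0 i1 -> A i1 i0 = B i1 i0 ->
  A i1 i1 = B i1 i1 -> A = B.
Proof.
move=> h1 h2 h3 h4; apply/matrixP => i j.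
by case: (i2_cases i) => ->; case: (i2_cases j) => ->.
Qed.

Lemma det2 A : \det A = A i0 i0 * A i1 i1 - A i0 i1 * A i1 i0.
Proof.
rewrite (expand_det_row _ i0) big_ord_recr big_ord1 /= /cofactor !det_mx11 /=.
rewrite !mxE /=.
have -> : (widen_ord (leqnSn 1) ord0 : 'I_2) = i0 by apply/val_inj.
have -> : lift i0 (0 : 'I_1) = i1 by apply/val_inj.
have -> : lift i1 (0 : 'I_1) = i0 by apply/val_inj.
have -> : (ord_max : 'I_2) = i1 by apply/val_inj.
rewrite expr0 expr1; lra.
Qed.
Lemma sum2 (F : 'I_2 -> R) : \sum_(i < 2) F i = F i0 + F i1.
Proof. rewrite big_ord_recr big_ord1 /=. by congr (F _ + F _); apply/val_inj. Qed.

Definition T2 A := A i0 i0 ^+ 2 + A i0 i1 ^+ 2 + A i1 i0 ^+ 2 + A i1 i1 ^+ 2.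

Lemma trE A : \tr (A^T *m A) = T2 A.
Proof. rewrite /mxtrace sum2 !mulE !mxE /T2; lra. Qed.

Lemma T2_ge0 A : 0 <= T2 A.
Proof. rewrite /T2; nra. Qed.

Lemma disc_ge0 A : 0 <= T2 A ^+ 2 - 4 * (\det A) ^+ 2.
Proof.
rewrite det2 /T2.
set a := A i0 i0; set b := A i0 i1; set c := A i1 i0; set d := A i1 i1.
have h1 : T2 A - 2 * (a*d - b*c) >= 0.
  rewrite /T2 -/a -/b -/c -/d. have := sqr_ge0 (a - d); have := sqr_ge0 (b + c). nra.
have h2 : T2 A + 2 * (a*d - b*c) >= 0.
  rewrite /T2 -/a -/b -/c -/d. have := sqr_ge0 (a + d); have := sqr_ge0 (b - c). nra.
rewrite -/(T2 A). have := mulr_ge0 h1 h2. nra.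
Qed.

Lemma sv_facts A : sv1 A * sv2 A = `|\det A| /\ sv1 A ^+ 2 <= T2 A /\ 0 <= sv1 A.
Proof.
rewrite /sv1 /sv2 /sv_disc trE.
have hd := disc_ge0 A. have hT := T2_ge0 A.
set D := Num.sqrt (T2 A ^+ 2 - _).
have D0 : 0 <= D by apply: sqrtr_ge0.
have DD : D ^+ 2 = T2 A ^+ 2 - 4 * (\det A) ^+ 2 by rewrite sqr_sqrtr.
have DT : D <= T2 A.
  nra.
have h1 : 0 <= (T2 A + D) / 2 by apply: divr_ge0; lra.
have h2 : 0 <= (T2 A - D) / 2 by apply: divr_ge0; lra.
split; last split.
- rewrite -sqrtrM // -(sqrtr_sqr (\det A)); congr Num.sqrt.
  have -> : (T2 A + D) / 2 * ((T2 A - D) / 2) = (T2 A ^+ 2 - D ^+ 2) / 4 by field.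
  rewrite DD; field.
- done.
- rewrite (sqr_sqrtr h1); lra.
- exact: sqrtr_ge0.
Qed.
Lemma cs2 (x0 x1 y0 y1 : R) : (x0 * y0 + x1 * y1) ^+ 2 <= (x0^+2 + x1^+2) * (y0^+2 + y1^+2).
Proof. have := sqr_ge0 (x0 * y1 - x1 * y0). nra. Qed.

Lemma T2M A B : T2 (A *m B) <= T2 A * T2 B.
Proof.
rewrite /T2 !mulE.
have := cs2 (A i0 i0) (A i0 i1) (B i0 i0) (B i1 i0).
have := cs2 (A i0 i0) (A i0 i1) (B i0 i1) (B i1 i1).
have := cs2 (A i1 i0) (A i1 i1) (B i0 i0) (B i1 i0).
have := cs2 (A i1 i0) (A i1 i1) (B i0 i1) (B i1 i1).
lra.
Qed.

Variable N : nat.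

Lemma dom_det (A : 'I_N -> 'M[R]_2) : dominated A -> exists C tau : R, 0 < C /\ 0 < tau < 1 /\
  forall w, `|\det (word_prod A w)| <= C * tau ^+ size w * T2 (word_prod A w).
Proof.
move=> [C [tau [C0 [tau01 H]]]]; exists C, tau; split => //; split => // w.
have [h1 [h2 h3]] := sv_facts (word_prod A w).
rewrite -h1. have := H w. set s1 := sv1 _. set s2 := sv2 _.
have : 0 <= C * tau ^+ size w. apply: mulr_ge0; [lra| apply: exprn_ge0; case/andP: tau01 => ? ?; lra].
move: h2 h3; rewrite -/s1. nra.
Qed.
Definition ut M := M i1 i0 = 0.

Lemma ut_mul {A B} : ut A -> ut B ->
  [/\ ut (A *m B), (A *m B) i0 i0 = A i0 i0 * B i0 i0 & (A *m B) i1 i1 = A i1 i1 * B i1 i1].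
Proof. rewrite /ut !mulE => ha hb; rewrite ha hb; split; lra. Qed.

Lemma ut1 : [/\ ut (1%:M : 'M[R]_2), (1%:M : 'M[R]_2) i0 i0 = 1 & (1%:M : 'M[R]_2) i1 i1 = 1].
Proof. by rewrite /ut !mxE. Qed.

Lemma wp_ut (F : 'I_N -> 'M[R]_2) w : (forall i, ut (F i)) ->
  [/\ ut (word_prod F w), word_prod F w i0 i0 = \prod_(i <- w) F i i0 i0
    & word_prod F w i1 i1 = \prod_(i <- w) F i i1 i1].
Proof.
move=> hF; rewrite /word_prod; elim: w => [|x w [h1 h2 h3]].
  by rewrite !big_nil; exact: ut1.
rewrite !big_cons -mulmxE. have [u1 u2 u3] := ut_mul (hF x) h1.
by rewrite u2 u3 h2 h3.
Qed.

Lemma unit_det M : \det M != 0 -> M \in unitmx.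
Proof. by rewrite unitmxE unitfE. Qed.

Lemma inv_uniq A B : A *m B = 1%:M -> invmx A = B.
Proof.
move=> h.
have hu : A \in unitmx.
  apply: unit_det; apply/eqP => hd. have := congr1 determinant h.
  rewrite det_mulmx hd mul0r det1 => /eqP; rewrite eq_sym oner_eq0 //.
by rewrite -[invmx A]mulmx1 -h mulmxA mulVmx // mul1mx.
Qed.

Lemma wp_conj P (F : 'I_N -> 'M[R]_2) w : P \in unitmx ->
  invmx P *m word_prod F w *m P = word_prod (fun i => invmx P *m F i *m P) w.
Proof.
move=> hP; rewrite /word_prod; elim: w => [|x w IH].
  by rewrite !big_nil mulmx1 mulVmx.
rewrite !big_cons -!mulmxE -IH.
by rewrite !mulmxA (mulmxK hP) -mulmxE.
Qed.

Definition rep (k : nat) (w : seq 'I_N) := flatten (nseq k w).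

Lemma wp_rep (F : 'I_N -> 'M[R]_2) k w : word_prod F (rep k w) = word_prod F w ^+ k.
Proof.
rewrite /word_prod /rep; elim: k => [|k IH]; first by rewrite expr0 big_nil.
by rewrite /= big_cat /= IH exprS.
Qed.

Lemma size_rep k w : size (rep k w) = (k * size w)%N.
Proof. rewrite /rep; elim: k => [|k IH] //=. by rewrite size_cat IH mulSn. Qed.
Lemma bern (h : R) k : 0 <= h -> 1 + k%:R * h <= (1 + h) ^+ k.
Proof.
move=> h0; elim: k => [|k IH]; first by rewrite expr0 mul0r addr0.
rewrite exprS -natr1.
have : 0 <= k%:R * h by apply: mulr_ge0 => //; exact: ler0n.
nra.
Qed.

Lemma expo (q X c : R) : 1 < q -> 0 <= X -> exists k : nat, X * (2 + k%:R ^+ 2 * c ^+ 2) < q ^+ k.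
Proof.
move=> q1 X0. set h := q - 1. have h0 : 0 < h by rewrite /h; lra.
have h3 : 0 < h ^+ 3 by apply: exprn_gt0.
set y := X * (2 + 9 * c ^+ 2) / h ^+ 3.
have y0 : 0 <= y.
  rewrite /y; apply: divr_ge0; last lra. apply: mulr_ge0 => //. have := sqr_ge0 c; lra.
set k := (Num.Def.archi_bound y).+1.
have ky : y < k%:R.
  rewrite /k -natr1. have := archi_boundP y0. lra.
have k1 : 1 <= k%:R :> R by rewrite /k ler1n.
exists (3 * k)%N.
have qk : k%:R * h <= q ^+ k.
  have := @bern h k (ltW h0). rewrite /h. have -> : 1 + (q - 1) = q by lra. lra.
have kh0 : 0 <= k%:R * h by apply: mulr_ge0; lra.
have q3 : (k%:R * h) ^+ 3 <= q ^+ (3 * k).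
  rewrite mulnC exprM. apply: lerXn2r => //; rewrite nnegrE //; lra.
have hy : X * (2 + 9 * c ^+ 2) < k%:R * h ^+ 3.
  have := ky; rewrite /y ltr_pdivrMr //.
have c2 : 0 <= c ^+ 2 := sqr_ge0 c.
have e1 : X * (2 + (3 * k)%:R ^+ 2 * c ^+ 2) <= k%:R ^+ 2 * (X * (2 + 9 * c ^+ 2)).
  rewrite natrM.
  have : 1 <= k%:R ^+ 2 :> R by rewrite -[1](expr1n _ 2); rewrite lerXn2r //; rewrite ?nnegrE; lra.
  nra.
have e2 : k%:R ^+ 2 * (X * (2 + 9 * c ^+ 2)) < (k%:R * h) ^+ 3.
  have k2 : 0 < k%:R ^+ 2 :> R by apply: exprn_gt0; lra.
  rewrite exprMn. have -> : k%:R ^+ 3 * h ^+ 3 = k%:R ^+ 2 * (k%:R * h ^+ 3) :> R by rewrite exprS; ring.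
  by rewrite ltr_pM2l.
lra.
Qed.
Lemma ut_pow {M} k : ut M ->
  [/\ ut (M ^+ k), (M ^+ k) i0 i0 = M i0 i0 ^+ k & (M ^+ k) i1 i1 = M i1 i1 ^+ k].
Proof.
move=> hM; elim: k => [|k [h1 h2 h3]]; first by rewrite !expr0; exact: ut1.
rewrite !exprS -mulmxE; have [u1 u2 u3] := ut_mul hM h1. by rewrite u2 u3 h2 h3.
Qed.

Lemma pow_off {M} k m c : ut M -> `|M i0 i0| <= m -> `|M i1 i1| <= m ->
  `|M i0 i1| <= c * m -> 0 <= c -> `|(M ^+ k) i0 i1| <= k%:R * c * m ^+ k.
Proof.
move=> hM h0 h1 h01 c0.
have m0 : 0 <= m by apply: le_trans h0.
elim: k => [|k IH]; first by rewrite expr0 !mxE /= normr0 mul0r mul0r.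
have [_ _ u3] := ut_pow k hM.
rewrite exprS -mulmxE mulE u3.
have e1 : `|M i1 i1 ^+ k| <= m ^+ k by rewrite normrX; apply: lerXn2r; rewrite ?nnegrE //.
have mk0 : 0 <= m ^+ k by apply: exprn_ge0.
have a1 : `|M i0 i0 * (M ^+ k) i0 i1| <= m * (k%:R * c * m ^+ k).
  rewrite normrM; apply: ler_pM => //.
have a2 : `|M i0 i1 * M i1 i1 ^+ k| <= c * m * m ^+ k.
  rewrite normrM; apply: ler_pM => //.
apply: le_trans (ler_normD _ _) _.
rewrite -natr1 exprS.
have : 0 <= k%:R * c * m ^+ k. apply: mulr_ge0 => //; apply: mulr_ge0 => //; exact: ler0n.
nra.
Qed.

Lemma T2_pow M k m c : ut M -> `|M i0 i0| <= m -> `|M i1 i1| <= m ->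
  `|M i0 i1| <= c * m -> 0 <= c -> T2 (M ^+ k) <= (2 + k%:R ^+ 2 * c ^+ 2) * (m ^+ k) ^+ 2.
Proof.
move=> hM h0 h1 h01 c0.
have m0 : 0 <= m by apply: le_trans h0.
have [u1 u2 u3] := ut_pow k hM.
have e := pow_off k m c hM h0 h1 h01 c0.
rewrite /T2 u1 u2 u3.
have mk0 : 0 <= m ^+ k by apply: exprn_ge0.
have e0 : (M i0 i0 ^+ k) ^+ 2 <= (m ^+ k) ^+ 2.
  rewrite -real_normK ?num_real // normrX; apply: lerXn2r; rewrite ?nnegrE //.
  by apply: lerXn2r; rewrite ?nnegrE.
have e1 : (M i1 i1 ^+ k) ^+ 2 <= (m ^+ k) ^+ 2.
  rewrite -real_normK ?num_real // normrX; apply: lerXn2r; rewrite ?nnegrE //.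
  by apply: lerXn2r; rewrite ?nnegrE.
have e2 : (M ^+ k) i0 i1 ^+ 2 <= (k%:R * c * m ^+ k) ^+ 2.
  rewrite -real_normK ?num_real //; apply: lerXn2r; rewrite ?nnegrE //.
  apply: mulr_ge0 => //; apply: mulr_ge0 => //; exact: ler0n.
rewrite expr0n /= addr0.
have ee : (k%:R * c * m ^+ k) ^+ 2 = k%:R ^+ 2 * c ^+ 2 * (m ^+ k) ^+ 2 by rewrite !exprMn.
rewrite ee in e2.
lra.
Qed.
Lemma det_ut M : ut M -> \det M = M i0 i0 * M i1 i1.
Proof. by rewrite det2 /ut => ->; rewrite mulr0 subr0. Qed.

Lemma core M (X s : R) : ut M -> M i0 i0 != 0 -> 0 <= X -> 0 < s ->
  (forall k, `|\det (M ^+ k)| <= X * s ^+ k * T2 (M ^+ k)) ->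
  forall m mu, `|M i0 i0| <= m -> `|M i1 i1| <= m -> `|M i0 i0| * `|M i1 i1| = mu * m ->
  mu <= s * m.
Proof.
move=> hM h00 X0 s0 H m mu hm0 hm1 hmu.
have m0 : 0 < m by apply: lt_le_trans hm0; rewrite normr_gt0.
have mu0 : 0 <= mu.
  have : 0 <= mu * m by rewrite -hmu; apply: mulr_ge0.
  by rewrite pmulr_lge0.
rewrite leNgt; apply/negP => hlt.
set t := s * m. have t0 : 0 < t by apply: mulr_gt0.
set q := mu / t.
have q1 : 1 < q by rewrite /q ltr_pdivlMr // mul1r.
set c := `|M i0 i1| / m.
have c0 : 0 <= c by apply: divr_ge0 => //; exact: ltW.
have hc : `|M i0 i1| <= c * m by rewrite /c divfK //; exact: lt0r_neq0.
have [k hk] := @expo q X c q1 X0.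
have e1 := H k.
have e2 := T2_pow _ k m c hM hm0 hm1 hc c0.
have [u1 u2 u3] := ut_pow k hM.
rewrite det_ut // u2 u3 -exprMn normrX normrM hmu in e1.
have mk0 : 0 < m ^+ k by apply: exprn_gt0.
have sk0 : 0 < s ^+ k by apply: exprn_gt0.
have e3 : (mu * m) ^+ k <= X * s ^+ k * ((2 + k%:R ^+ 2 * c ^+ 2) * (m ^+ k) ^+ 2).
  apply: le_trans e1 _; apply: ler_wpM2l => //; apply: mulr_ge0 => //; exact: ltW.
have muq : mu = q * t by rewrite /q divfK //; exact: lt0r_neq0.
have ht : t = s * m by [].
clearbody q c t.
have e4 : q ^+ k * (t ^+ k * m ^+ k) <= X * (2 + k%:R ^+ 2 * c ^+ 2) * (t ^+ k * m ^+ k).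
  move: e3; rewrite muq ht !exprMn.
  have -> : q ^+ k * (s ^+ k * m ^+ k) * m ^+ k = q ^+ k * (s ^+ k * m ^+ k * m ^+ k) by ring.
  have -> : X * s ^+ k * ((2 + k%:R ^+ 2 * c ^+ 2) * (m ^+ k) ^+ 2) = X * (2 + k%:R ^+ 2 * c ^+ 2) * (s ^+ k * m ^+ k * m ^+ k) by ring.
  done.
rewrite ler_pM2r in e4; last by apply: mulr_gt0 => //; apply: exprn_gt0.
lra.
Qed.
Lemma det_conj P M : P \in unitmx -> \det (invmx P *m M *m P) = \det M.
Proof.
move=> hP; rewrite !det_mulmx det_inv mulrC mulrA mulrC mulrA.
by rewrite mulfK // -unitfE -unitmxE.
Qed.

Lemma unconj P M : P \in unitmx -> M = P *m (invmx P *m M *m P) *m invmx P.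
Proof. move=> hP; by rewrite !mulmxA mulmxV // mul1mx mulmxK. Qed.

Lemma T2_conj P M : P \in unitmx ->
  T2 M <= T2 P * T2 (invmx P) * T2 (invmx P *m M *m P).
Proof.
move=> hP; rewrite {1}(unconj P M hP).
apply: le_trans (T2M _ _) _.
have := T2M P (invmx P *m M *m P).
have := T2_ge0 (invmx P). have := T2_ge0 (P *m (invmx P *m M *m P)).
have := T2_ge0 P. have := T2_ge0 (invmx P *m M *m P). nra.
Qed.

Lemma prod_nseq (F : 'I_N -> R) n a : \prod_(i <- nseq n a) F i = F a ^+ n.
Proof. elim: n => [|n IH]; first by rewrite big_nil expr0. by rewrite /= big_cons IH exprS. Qed.

Lemma small_pow (t e : R) : 0 < t < 1 -> 0 < e -> exists k : nat, t ^+ k < e.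
Proof.
move=> /andP [t0 t1] e0.
have q1 : 1 < t^-1 by rewrite invf_gt1.
have ei : 0 < e^-1 by rewrite invr_gt0.
have [k hk] := @expo t^-1 e^-1 0 q1 (ltW ei).
exists k. rewrite expr0n /= mulr0 addr0 exprVn in hk.
have tk0 : 0 < t ^+ k by apply: exprn_gt0.
rewrite -ltf_pV2 ?posrE //.
lra.
Qed.
Lemma dom_word (A : 'I_N -> 'M[R]_2) P : P \in unitmx -> (forall i, A i \in unitmx) ->
  (forall i, ut (invmx P *m A i *m P)) -> dominated A ->
  exists tau : R, 0 < tau < 1 /\ forall w m mu,
    `|\prod_(i <- w) (invmx P *m A i *m P) i0 i0| <= m ->
    `|\prod_(i <- w) (invmx P *m A i *m P) i1 i1| <= m ->
    `|\prod_(i <- w) (invmx P *m A i *m P) i0 i0| * `|\prod_(i <- w) (invmx P *m A i *m P) i1 i1| = mu * m ->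
    mu <= tau ^+ size w * m.
Proof.
move=> hP hA hut /dom_det [C [tau [C0 [tau01 H]]]].
exists tau; split => // w m mu.
set B := fun i => invmx P *m A i *m P.
have [u1 u2 u3] := wp_ut B w hut.
rewrite -/(word_prod B w) in u1 u2 u3.
rewrite -u2 -u3.
have hB0 : forall i, (B i) i0 i0 != 0.
  move=> i; apply/eqP => h0.
  move: h0; rewrite /B => h0. have := det_conj P (A i) hP; rewrite (det_ut _ (hut i)).
  rewrite h0 mul0r => /esym/eqP.
  by have := hA i; rewrite unitmxE unitfE => /negP.
have a0 : word_prod B w i0 i0 != 0.
  rewrite u2; elim: w {u1 u2 u3} => [|x w IH]; first by rewrite big_nil oner_eq0.
  by rewrite big_cons mulf_neq0.
have tau0 : 0 < tau by case/andP: tau01.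
apply: (@core _ (C * T2 P * T2 (invmx P)) _ u1 a0).
- apply: mulr_ge0; [apply: mulr_ge0; [exact: ltW|exact: T2_ge0]|exact: T2_ge0].
- exact: exprn_gt0.
move=> k.
have e1 : word_prod B w ^+ k = invmx P *m word_prod A (rep k w) *m P.
  by rewrite -wp_rep wp_conj.
rewrite e1 det_conj //.
apply: le_trans (H (rep k w)) _.
rewrite size_rep mulnC exprM.
have := T2_conj P (word_prod A (rep k w)) hP.
have : 0 <= C * (tau ^+ size w) ^+ k.
  apply: mulr_ge0; [exact: ltW|apply: exprn_ge0; apply: exprn_ge0; exact: ltW].
move=> h1 h2.
have := ler_wpM2l h1 h2.
move=> h3; apply: le_trans h3 _.
rewrite !mulrA le_eqVlt; apply/orP; left; apply/eqP; ring.
Qed.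
Lemma mixed (tau x y x' y' : R) : 0 < tau < 1 -> 0 < y < x -> 0 < x' < y' ->
  (forall n M : nat, y ^+ n * y' ^+ M <= x ^+ n * x' ^+ M ->
     y ^+ n * y' ^+ M <= tau ^+ (n + M) * (x ^+ n * x' ^+ M)) -> False.
Proof.
move=> /andP [t0 t1] /andP [y0 yx] /andP [x0 xy] H.
have x00 : 0 < x by lra.
have y00 : 0 < y' by lra.
have [M0 hM0] := @small_pow tau (y / x) (introT andP (conj t0 t1)) (divr_gt0 y0 x00).
set M := M0.+1.
have tM : tau ^+ M < y / x.
  apply: le_lt_trans hM0. rewrite /M exprS. have := exprn_ge0 M0 (ltW t0). nra.
have q1 : 1 < x / y by rewrite ltr_pdivlMr // mul1r.
have X0 : 0 <= (y' / x') ^+ M by apply: exprn_ge0; apply: divr_ge0; lra.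
have [n0 hn0] := @expo (x / y) ((y' / x') ^+ M) 0 q1 X0.
have ex : exists n : nat, y ^+ n * y' ^+ M <= x ^+ n * x' ^+ M.
  exists n0. rewrite expr0n /= mulr0 addr0 !expr_div_n in hn0.
  have yn : 0 < y ^+ n0 by apply: exprn_gt0.
  have xn : 0 < x' ^+ M by apply: exprn_gt0.
  have ha : y' ^+ M / x' ^+ M <= x ^+ n0 / y ^+ n0.
    have : 0 <= y' ^+ M / x' ^+ M by apply: divr_ge0; apply: exprn_ge0; lra.
    lra.
  rewrite ler_pdivrMr // in ha.
  have e : y ^+ n0 * (x ^+ n0 / y ^+ n0 * x' ^+ M) = x ^+ n0 * x' ^+ M by field; lra.
  rewrite -e; apply: ler_wpM2l => //; exact: ltW.
have [n hn hmin] := find_ex_minn ex.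
case: n hn hmin => [|n] hn hmin.
  rewrite !expr0 !mul1r in hn.
  have : x' ^+ M < y' ^+ M by rewrite ltrXn2r //; lra.
  lra.
have hnot : x ^+ n * x' ^+ M < y ^+ n * y' ^+ M.
  rewrite ltNge; apply/negP => hp. by have := hmin n hp; rewrite ltnn.
have h1 := H n.+1 M hn.
have tle : tau ^+ (n.+1 + M) <= tau ^+ M.
  rewrite exprD. have := exprn_ge0 M (ltW t0). have := exprn_ile1 n.+1 (ltW t0) (ltW t1).
  have := exprn_ge0 n.+1 (ltW t0). nra.
have pos : 0 < x ^+ n.+1 * x' ^+ M by apply: mulr_gt0; apply: exprn_gt0; lra.
have h2 : y ^+ n.+1 * y' ^+ M < y / x * (x ^+ n.+1 * x' ^+ M).
  apply: le_lt_trans h1 _. rewrite ltr_pM2r //. exact: le_lt_trans tle tM.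
rewrite (exprS y n) (exprS x n) in h2.
have e : y / x * (x * x ^+ n * x' ^+ M) = y * (x ^+ n * x' ^+ M) by field; lra.
rewrite e -mulrA in h2.
have : y * (y ^+ n * y' ^+ M) < y * (x ^+ n * x' ^+ M) by [].
rewrite ltr_pM2l //. lra.
Qed.
Lemma B_nz (A : 'I_N -> 'M[R]_2) P i : P \in unitmx -> A i \in unitmx ->
  ut (invmx P *m A i *m P) ->
  (invmx P *m A i *m P) i0 i0 != 0 /\ (invmx P *m A i *m P) i1 i1 != 0.
Proof.
move=> hP hA hu.
have := det_conj P (A i) hP; rewrite (det_ut _ hu) => e.
have : \det (A i) != 0 by rewrite -unitfE -unitmxE.
rewrite -e mulf_eq0 negb_or => /andP [] //.
Qed.

Lemma dom_sign (A : 'I_N -> 'M[R]_2) P : P \in unitmx -> (forall i, A i \in unitmx) ->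
  (forall i, ut (invmx P *m A i *m P)) -> dominated A ->
  (forall i, `|(invmx P *m A i *m P) i1 i1| < `|(invmx P *m A i *m P) i0 i0|) \/
  (forall i, `|(invmx P *m A i *m P) i0 i0| < `|(invmx P *m A i *m P) i1 i1|).
Proof.
move=> hP hA hut hd.
have [tau [tau01 H]] := dom_word A P hP hA hut hd.
have tau0 : 0 < tau by case/andP: tau01.
have tau1 : tau < 1 by case/andP: tau01.
have nz := fun i => B_nz A P i hP (hA i) (hut i).
have neq : forall i, `|(invmx P *m A i *m P) i0 i0| != `|(invmx P *m A i *m P) i1 i1|.
  move=> i; apply/eqP => e.
  have := H [:: i] `|(invmx P *m A i *m P) i0 i0| `|(invmx P *m A i *m P) i0 i0|.
  rewrite !big_seq1 -e expr1 => /(_ (lexx _) (lexx _) erefl).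
  have : 0 < `|(invmx P *m A i *m P) i0 i0| by rewrite normr_gt0; case: (nz i).
  nra.
case: (pselect (forall i, `|(invmx P *m A i *m P) i1 i1| < `|(invmx P *m A i *m P) i0 i0|)) => [h|h1]; first by left.
case: (pselect (forall i, `|(invmx P *m A i *m P) i0 i0| < `|(invmx P *m A i *m P) i1 i1|)) => [h|h2]; first by right.
exfalso.
move/existsNP: h1 => [i hi]. move/existsNP: h2 => [j hj].
have hi' : `|(invmx P *m A i *m P) i0 i0| < `|(invmx P *m A i *m P) i1 i1|.
  by rewrite lt_neqAle (neq i) /= leNgt; apply/negP.
have hj' : `|(invmx P *m A j *m P) i1 i1| < `|(invmx P *m A j *m P) i0 i0|.
  by rewrite lt_neqAle eq_sym (neq j) /= leNgt; apply/negP.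
apply: (@mixed tau `|(invmx P *m A j *m P) i0 i0| `|(invmx P *m A j *m P) i1 i1|
   `|(invmx P *m A i *m P) i0 i0| `|(invmx P *m A i *m P) i1 i1| tau01).
- by rewrite hj' normr_gt0 andbT; case: (nz j).
- by rewrite hi' normr_gt0 andbT; case: (nz i).
move=> n M hle.
have := H (nseq n j ++ nseq M i) (`|(invmx P *m A j *m P) i0 i0| ^+ n * `|(invmx P *m A i *m P) i0 i0| ^+ M)
   (`|(invmx P *m A j *m P) i1 i1| ^+ n * `|(invmx P *m A i *m P) i1 i1| ^+ M).
rewrite !big_cat !(prod_nseq (fun k => (invmx P *m A k *m P) _ _)) /= !normrM !normrX size_cat !size_nseq.
apply => //. by rewrite mulrC.
Qed.
Definition nm M := `|M i0 i0| + `|M i0 i1| + `|M i1 i0| + `|M i1 i1|.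

Lemma nm_ge0 M : 0 <= nm M.
Proof. rewrite /nm. have := normr_ge0 (M i0 i0); have := normr_ge0 (M i0 i1);
  have := normr_ge0 (M i1 i0); have := normr_ge0 (M i1 i1). lra. Qed.

Lemma nm_entry M i j : `|M i j| <= nm M.
Proof.
rewrite /nm. have := normr_ge0 (M i0 i0); have := normr_ge0 (M i0 i1);
  have := normr_ge0 (M i1 i0); have := normr_ge0 (M i1 i1).
by case: (i2_cases i) => ->; case: (i2_cases j) => ->; lra.
Qed.

Lemma nm_mul A B : nm (A *m B) <= nm A * nm B.
Proof.
rewrite /nm !mulE.
have h : forall a b c d : R, `|a * b + c * d| <= `|a| * `|b| + `|c| * `|d|.
  by move=> a b c d; rewrite -!normrM; apply: ler_normD.
have := h (A i0 i0) (B i0 i0) (A i0 i1) (B i1 i0).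
have := h (A i0 i0) (B i0 i1) (A i0 i1) (B i1 i1).
have := h (A i1 i0) (B i0 i0) (A i1 i1) (B i1 i0).
have := h (A i1 i0) (B i0 i1) (A i1 i1) (B i1 i1).
have := normr_ge0 (A i0 i0); have := normr_ge0 (A i0 i1);
  have := normr_ge0 (A i1 i0); have := normr_ge0 (A i1 i1).
have := normr_ge0 (B i0 i0); have := normr_ge0 (B i0 i1);
  have := normr_ge0 (B i1 i0); have := normr_ge0 (B i1 i1).
nra.
Qed.

Lemma eps_le (x y K : R) : 0 <= K -> (forall e, 0 < e -> x <= y + K * e) -> x <= y.
Proof.
move=> K0 H; rewrite leNgt; apply/negP => hlt.
have e0 : 0 < (x - y) / (2 * (K + 1)) by apply: divr_gt0; lra.
have := H _ e0.
have -> : K * ((x - y) / (2 * (K + 1))) = (x - y) * (K / (2 * (K + 1))) by field; lra.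
have : K / (2 * (K + 1)) < 1.
  rewrite ltr_pdivrMr; lra.
have : 0 <= K / (2 * (K + 1)) by apply: divr_ge0; lra.
nra.
Qed.

Lemma inv_ut B : \det B != 0 -> ut B ->
  [/\ ut (invmx B), invmx B i0 i0 * B i0 i0 = 1 & invmx B i1 i1 * B i1 i1 = 1].
Proof.
move=> hd hu.
have hB : B \in unitmx by exact: unit_det.
have e1 := mulVmx hB. have e2 := mulmxV hB.
have f1 : invmx B i1 i0 * B i0 i0 = 0.
  have := congr1 (fun M => M i1 i0) e1; rewrite /= mulE hu mulr0 addr0 !mxE. done.
have b0 : B i0 i0 != 0 by move: hd; rewrite det_ut // mulf_eq0 negb_or => /andP [].
have u : ut (invmx B).
  by move: f1 => /eqP; rewrite mulf_eq0 (negbTE b0) orbF => /eqP.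
split => //.
- have := congr1 (fun M => M i0 i0) e2; rewrite /= mulE u mulr0 addr0 !mxE mulrC. done.
- have := congr1 (fun M => M i1 i1) e2; rewrite /= mulE hu mul0r add0r !mxE mulrC. done.
Qed.
Lemma closure_mx (S : set 'M[R]_2) M : closure S M <-> forall e : R, 0 < e -> exists X, S X /\ forall i j, `|M i j - X i j| < e.
Proof.
split.
- move=> cl e e0. have := cl (ball M e). case.
   by apply/nbhs_ballP; exists e.
  move=> X [SX bX]; exists X; split => // i j. case: bX => _ /(_ i j). by rewrite /ball /=.
- move=> H B /nbhs_ballP [e e0 eB]. have [X [SX HX]] := H e e0.
  exists X; split => //; apply: eB; split => // i j; rewrite /ball /=; exact: HX.
Qed.

Lemma inv_conj P M : P \in unitmx -> M \in unitmx ->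
  invmx P *m invmx M *m P = invmx (invmx P *m M *m P).
Proof.
move=> hP hM; apply/esym/inv_uniq.
by rewrite !mulmxA (mulmxK hP) (mulmxK hM) mulVmx.
Qed.

Lemma S_inv (A : 'I_N -> 'M[R]_2) P : P \in unitmx -> (forall i, A i \in unitmx) ->
  (forall i, ut (invmx P *m A i *m P)) ->
  (forall i, `|(invmx P *m A i *m P) i0 i0| < `|(invmx P *m A i *m P) i1 i1|) ->
  forall X, furst_set A X ->
  (invmx P *m X *m P) i1 i0 = 0 /\ `|(invmx P *m X *m P) i1 i1| <= `|(invmx P *m X *m P) i0 i0|.
Proof.
move=> hP hA hut hlt X [c [w ->]].
set G := fun i => invmx (invmx P *m A i *m P).
have hG : forall i, ut (G i) /\ `|G i i1 i1| <= `|G i i0 i0|.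
  move=> i.
  have hd : \det (invmx P *m A i *m P) != 0 by rewrite det_conj // -unitfE -unitmxE.
  have [u e0 e1] := inv_ut _ hd (hut i).
  split => //.
  have := hlt i. move: e0 e1. rewrite /G.
  set g0 := invmx _ i0 i0. set g1 := invmx _ i1 i1.
  set b0 := (invmx P *m A i *m P) i0 i0. set b1 := (invmx P *m A i *m P) i1 i1.
  move=> e0 e1 h.
  have f0 : `|g0| * `|b0| = 1 by rewrite -normrM e0 normr1.
  have f1 : `|g1| * `|b1| = 1 by rewrite -normrM e1 normr1.
  have := normr_ge0 g0; have := normr_ge0 g1; have := normr_ge0 b0.
  nra.
have e : invmx P *m (c *: \prod_(i <- w) invmx (A i)) *m P = c *: word_prod G w.
  rewrite -scalemxAr -scalemxAl; congr (_ *: _).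
  have := wp_conj P (fun i => invmx (A i)) w hP; rewrite /word_prod => ->.
  by apply: eq_bigr => i _; rewrite inv_conj.
rewrite e !mxE.
have [u1 u2 u3] := wp_ut G w (fun i => (hG i).1).
rewrite u1 mulr0; split => //.
rewrite !normrM u2 u3; apply: ler_wpM2l => //.
elim: w {e u1 u2 u3} => [|x w IH]; first by rewrite !big_nil.
rewrite !big_cons !normrM; apply: ler_pM => //; exact: (hG x).2.
Qed.
Lemma conj_close (Q P M X : 'M[R]_2) (e : R) : (forall i j, `|M i j - X i j| <= e) ->
  forall i j, `|(Q *m M *m P) i j - (Q *m X *m P) i j| <= nm Q * nm P * 4 * e.
Proof.
move=> H i j.
have -> : (Q *m M *m P) i j - (Q *m X *m P) i j = (Q *m (M - X) *m P) i j.
  by rewrite mulmxBr mulmxBl !mxE.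
apply: le_trans (nm_entry _ i j) _.
apply: le_trans (nm_mul _ _) _.
have h1 := nm_mul Q (M - X).
have h2 : nm (M - X) <= 4 * e.
  rewrite /nm !mxE. have := H i0 i0; have := H i0 i1; have := H i1 i0; have := H i1 i1. lra.
apply: le_trans (ler_wpM2r (nm_ge0 P) h1) _.
have -> : nm Q * nm P * 4 * e = nm Q * (4 * e) * nm P by ring.
have h3 := ler_wpM2l (nm_ge0 Q) h2. have h4 := ler_wpM2r (nm_ge0 P) h3. exact: h4.
Qed.

Lemma cl_inv (A : 'I_N -> 'M[R]_2) P : P \in unitmx -> (forall i, A i \in unitmx) ->
  (forall i, ut (invmx P *m A i *m P)) ->
  (forall i, `|(invmx P *m A i *m P) i0 i0| < `|(invmx P *m A i *m P) i1 i1|) ->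
  forall M, closure (furst_set A) M ->
  (invmx P *m M *m P) i1 i0 = 0 /\ `|(invmx P *m M *m P) i1 i1| <= `|(invmx P *m M *m P) i0 i0|.
Proof.
move=> hP hA hut hlt M /closure_mx cl.
set K := nm (invmx P) * nm P * 4.
have K0 : 0 <= K by rewrite /K; apply: mulr_ge0; [apply: mulr_ge0; apply: nm_ge0|lra].
have H : forall e, 0 < e -> exists X, furst_set A X /\
    forall i j, `|(invmx P *m M *m P) i j - (invmx P *m X *m P) i j| <= K * e.
  move=> e e0; have [X [SX HX]] := cl e e0; exists X; split => //.
  apply: conj_close => i j; exact: ltW.
split.
- apply/normr0_eq0/eqP; rewrite eq_le normr_ge0 andbT.
  apply: (@eps_le _ 0 K K0) => e e0.
  have [X [SX HX]] := H e e0. have [h0 _] := S_inv A P hP hA hut hlt X SX.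
  have := HX i1 i0; rewrite h0 subr0. lra.
- apply: (@eps_le _ _ (2 * K)); first lra.
  move=> e e0.
  have [X [SX HX]] := H e e0. have [_ h1] := S_inv A P hP hA hut hlt X SX.
  have a1 := HX i1 i1. have a0 := HX i0 i0.
  have b1 := ler_dist_dist ((invmx P *m M *m P) i1 i1) ((invmx P *m X *m P) i1 i1).
  have b0 := ler_dist_dist ((invmx P *m M *m P) i0 i0) ((invmx P *m X *m P) i0 i0).
  move: b1; rewrite ler_norml => /andP [b1 b1']. move: b0; rewrite ler_norml => /andP [b0 b0']. have : 2 * K * e = 2 * (K * e) by rewrite mulrA. lra.
Qed.
Lemma rank1_det M : \rank M = 1%N -> \det M = 0.
Proof.
move=> hr; apply/eqP; rewrite -[_ == 0]negbK; apply/negP => hd.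
have := mxrank_unit (unit_det _ hd). by rewrite hr.
Qed.

Lemma rank1 M : M != 0 -> \det M = 0 -> \rank M = 1%N.
Proof.
move=> h0 hd.
have r2 := rank_leq_row M.
have rn0 : \rank M != 0%N by rewrite mxrank_eq0.
have rn2 : \rank M != 2%N.
  apply/eqP => e. have : row_free M by rewrite /row_free e.
  rewrite row_free_unit unitmxE unitfE hd. by rewrite eqxx.
move: r2 rn0 rn2; case: (\rank M) => [|[|[|k]]] //.
Qed.

Definition vrow (P : 'M[R]_2) : 'rV[R]_2 := \row_(j < 2) P j i0.

Lemma genmx_eq M P : P \in unitmx -> \rank M = 1%N ->
  (invmx P *m M *m P) i1 i0 = 0 -> (invmx P *m M *m P) i1 i1 = 0 ->
  (<< M^T >> = << vrow P >>)%MS.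
Proof.
move=> hP hr h10 h11.
set NM := invmx P *m M *m P in h10 h11 *.
have eM : M = P *m NM *m invmx P by rewrite /NM; exact: unconj.
clearbody NM.
have sub : (M^T <= vrow P)%MS.
  apply/submxP; exists (\matrix_(i < 2, j < 1) (NM *m invmx P) i0 i).
  apply/matrixP => i j. rewrite [in RHS]mxE big_ord1 !mxE eM.
  rewrite sum2 !mulE h10 h11. ring.
apply/genmxP.
have r1 : (\rank (vrow P) <= 1)%N := rank_leq_row _.
have := mxrank_leqif_eq sub. move=> [hle <-].
rewrite mxrank_tr hr in hle *. apply/eqP; apply/anti_leq. by rewrite hle r1.
Qed.
Lemma pow01 M k : ut M ->
  (M ^+ k) i0 i1 * (M i0 i0 - M i1 i1) = M i0 i1 * (M i0 i0 ^+ k - M i1 i1 ^+ k).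
Proof.
move=> hM; elim: k => [|k IH]; first by rewrite expr0 !mxE /= mul0r !expr0 subrr mulr0.
have [_ _ u3] := ut_pow k hM.
rewrite exprS -mulmxE mulE u3.
have -> : (M i0 i0 * (M ^+ k) i0 i1 + M i0 i1 * M i1 i1 ^+ k) * (M i0 i0 - M i1 i1)
  = M i0 i0 * ((M ^+ k) i0 i1 * (M i0 i0 - M i1 i1)) + M i0 i1 * M i1 i1 ^+ k * (M i0 i0 - M i1 i1) by ring.
rewrite IH !exprS. ring.
Qed.

Definition N0 (g : R) : 'M[R]_2 :=
  \matrix_(i < 2, j < 2) (if i == i0 then (if j == i0 then 1 else g) else 0).

Lemma N0E g : [/\ N0 g i0 i0 = 1, N0 g i0 i1 = g, N0 g i1 i0 = 0 & N0 g i1 i1 = 0].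
Proof. by rewrite !mxE. Qed.
Lemma M0_exists (A : 'I_N -> 'M[R]_2) P : (0 < N)%N -> P \in unitmx -> (forall i, A i \in unitmx) ->
  (forall i, ut (invmx P *m A i *m P)) ->
  (forall i, `|(invmx P *m A i *m P) i0 i0| < `|(invmx P *m A i *m P) i1 i1|) ->
  exists M0, closure (furst_set A) M0 /\ \rank M0 = 1%N.
Proof.
move=> hN hP hA hut hlt.
set j0 : 'I_N := Ordinal hN.
set Bj := invmx P *m A j0 *m P.
have hd : \det Bj != 0 by rewrite /Bj det_conj // -unitfE -unitmxE.
set G := invmx Bj.
have [uG e0 e1] := inv_ut _ hd (hut j0).
rewrite -/G in uG e0 e1.
set a := G i0 i0 in e0 *. set d := G i1 i1 in e1 *. set b := G i0 i1.
have hlt' : `|d| < `|a|.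
  have := hlt j0. rewrite -/Bj. move: e0 e1.
  set b0 := Bj i0 i0. set b1 := Bj i1 i1. move=> e0 e1 h.
  have f0 : `|a| * `|b0| = 1 by rewrite -normrM e0 normr1.
  have f1 : `|d| * `|b1| = 1 by rewrite -normrM e1 normr1.
  have ap : 0 < `|a|.
    rewrite lt_neqAle normr_ge0 andbT eq_sym; apply/eqP => z; move: f0; rewrite z mul0r.
    by move/eqP; rewrite eq_sym oner_eq0.
  have b1p : 0 < `|b1| by have := normr_ge0 b0; lra.
  rewrite ltNge; apply/negP => hh.
  have := ler_wpM2r (ltW b1p) hh.
  have h2 : `|a| * `|b0| < `|a| * `|b1| by rewrite ltr_pM2l.
  lra.
have a0 : a != 0 by apply/eqP => h; move: e0; rewrite h mul0r => /eqP; rewrite eq_sym oner_eq0.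
have d0 : d != 0 by apply/eqP => h; move: e1; rewrite h mul0r => /eqP; rewrite eq_sym oner_eq0.
have ad : a - d != 0.
  apply/eqP => h; have e : a = d by lra. by move: hlt'; rewrite e ltxx.
set g := b / (a - d).
set M0 := P *m N0 g *m invmx P.
have eN : invmx P *m M0 *m P = N0 g by rewrite /M0 !mulmxA mulVmx // mul1mx mulmxKV.
exists M0; split; last first.
  apply: rank1.
  - apply/eqP => h. have := congr1 (fun M => (invmx P *m M *m P) i0 i0) h.
    rewrite /= eN mulmx0 mul0mx !mxE /=. move/eqP. by rewrite oner_eq0.
  - rewrite -(det_conj P M0 hP) eN det2. have [-> -> -> ->] := N0E g.
    ring.
apply/closure_mx => e epos.
set rho := `|d| / `|a|.
have ap : 0 < `|a| by rewrite normr_gt0.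
have dp : 0 < `|d| by rewrite normr_gt0.
have rho01 : 0 < rho < 1.
  apply/andP; split; first by apply: divr_gt0.
  by rewrite ltr_pdivrMr // mul1r.
set Kc := nm P * nm (invmx P) * 4 * (`|g| + 1).
have Kc0 : 0 <= Kc.
  apply: mulr_ge0; last by have := normr_ge0 g; lra.
  apply: mulr_ge0; last lra. apply: mulr_ge0; apply: nm_ge0.
have eK : 0 < e / (Kc + 1) by apply: divr_gt0 => //; lra.
have [k hk] := @small_pow rho (e / (Kc + 1)) rho01 eK.
set w := rep k [:: j0].
set X := (a ^+ k)^-1 *: \prod_(i <- w) invmx (A i).
exists X; split; first by exists (a ^+ k)^-1, w.
set Y := invmx P *m X *m P.
have eY : Y = (a ^+ k)^-1 *: G ^+ k.
  rewrite /Y /X -scalemxAr -scalemxAl; congr (_ *: _).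
  have := wp_conj P (fun i => invmx (A i)) w hP; rewrite /word_prod => ->.
  have := wp_rep (fun i => invmx P *m invmx (A i) *m P) k [:: j0].
  rewrite /word_prod -/w => ->. by rewrite big_seq1 inv_conj.
have eX : X = P *m Y *m invmx P by exact: unconj.
have ak : a ^+ k != 0 by apply: expf_neq0.
have [u1 u2 u3] := ut_pow k uG.
have h01 := pow01 _ k uG. rewrite -/a -/b -/d in h01 u2 u3.
have rk : `|d ^+ k / a ^+ k| = rho ^+ k by rewrite normrM normfV !normrX -exprVn -exprMn.
have rk0 : 0 <= rho ^+ k by apply: exprn_ge0; case/andP: rho01 => ? ?; lra.
have close : forall i j, `|N0 g i j - Y i j| <= (`|g| + 1) * rho ^+ k.
  have [n00 n01 n10 n11] := N0E g.
  have hg0 : 0 <= `|g| := normr_ge0 g.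
  move=> i j; rewrite eY !mxE.
  case: (i2_cases i) => ->; case: (i2_cases j) => ->.
  - rewrite /= u2 mulVf // subrr normr0. nra.
  - rewrite /=.
    have -> : (G ^+ k) i0 i1 = g * (a ^+ k - d ^+ k).
      apply: (mulIf ad). rewrite h01 /g. field. done.
    have -> : g - (a ^+ k)^-1 * (g * (a ^+ k - d ^+ k)) = g * (d ^+ k / a ^+ k) by field.
    rewrite normrM rk. nra.
  - rewrite /= u1 mulr0 subrr normr0. nra.
  - rewrite /= u3 sub0r normrN mulrC rk. nra.
move=> i j.
have := conj_close P (invmx P) (N0 g) Y ((`|g| + 1) * rho ^+ k) close i j.
rewrite -eX -/M0 => h.
apply: le_lt_trans h _.
have -> : nm P * nm (invmx P) * 4 * ((`|g| + 1) * rho ^+ k) = Kc * rho ^+ k by rewrite /Kc; ring.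
have : Kc * rho ^+ k <= Kc * (e / (Kc + 1)) by apply: ler_wpM2l => //; exact: ltW.
have : Kc * (e / (Kc + 1)) < e.
  rewrite mulrA ltr_pdivrMr; last lra. nra.
lra.
Qed.
Lemma XF_single (A : 'I_N -> 'M[R]_2) P : (0 < N)%N -> P \in unitmx -> (forall i, A i \in unitmx) ->
  (forall i, ut (invmx P *m A i *m P)) ->
  (forall i, `|(invmx P *m A i *m P) i0 i0| < `|(invmx P *m A i *m P) i1 i1|) ->
  exists L, XF A = [set L].
Proof.
move=> hN hP hA hut hlt.
have key : forall M, closure (furst_set A) M -> \rank M = 1%N -> (<< M^T >> = << vrow P >>)%MS.
  move=> M cl hr.
  have [h10 hle] := cl_inv A P hP hA hut hlt M cl.
  apply: genmx_eq => //.
  have hd := rank1_det _ hr.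
  rewrite -(det_conj P M hP) det_ut // in hd.
  move/eqP: hd; rewrite mulf_eq0 => /orP [/eqP h0|/eqP //].
  by move: hle; rewrite h0 normr0 normr_le0 => /eqP.
have [M0 [cl0 r0]] := M0_exists A P hN hP hA hut hlt.
exists (<< vrow P >>)%MS.
rewrite predeqE => L; split.
- by move=> [M [cl [hr ->]]]; rewrite /set1 /=; exact: key.
- move=> ->; exists M0; split => //; split => //; exact/esym/key.
Qed.
Lemma vnorm_le (y : 'cV[R]_2) : vnorm y <= `|y i0 ord0| + `|y i1 ord0|.
Proof.
rewrite /vnorm.
have h : 0 <= `|y i0 ord0| + `|y i1 ord0| by apply: addr_ge0.
rewrite -(ger0_norm h) -sqrtr_sqr ler_sqrt; last exact: sqr_ge0.
rewrite -(real_normK (num_real (y i0 ord0))) -(real_normK (num_real (y i1 ord0))).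
have := normr_ge0 (y i0 ord0); have := normr_ge0 (y i1 ord0). nra.
Qed.

Lemma vnorm_scale (c : R) (u : 'cV[R]_2) : vnorm (c *: u) = `|c| * vnorm u.
Proof.
rewrite /vnorm !mxE -sqrtr_sqr -sqrtrM ?sqr_ge0 //; congr Num.sqrt; ring.
Qed.

Lemma eig_le (A : 'M[R]_2) (u : 'cV[R]_2) l : vnorm u = 1 -> A *m u = l *: u -> `|l| <= opnorm A.
Proof.
move=> hu hA.
rewrite /opnorm; apply: ub_le_sup; last first.
  by exists u => //; rewrite hA vnorm_scale hu mulr1.
exists (nm A) => _ [x hx <-].
have hx' : forall k, `|x k ord0| <= 1.
  move: hx; rewrite /= /vnorm => hx k.
  have s : x i0 ord0 ^+ 2 + x i1 ord0 ^+ 2 = 1.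
    by rewrite -[LHS]sqr_sqrtr ?hx ?expr1n //; apply: addr_ge0; apply: sqr_ge0.
  rewrite -(ler_pXn2r (n:=2)) ?nnegrE // ?expr1n ?real_normK ?num_real //.
  have := sqr_ge0 (x i0 ord0); have := sqr_ge0 (x i1 ord0).
  by case: (i2_cases k) => ->; lra.
apply: le_trans (vnorm_le _) _.
rewrite !mulE /nm.
have h : forall a b c d : R, `|c| <= 1 -> `|d| <= 1 -> `|a * c + b * d| <= `|a| + `|b|.
  move=> a b c d hc hd; apply: le_trans (ler_normD _ _) _; rewrite !normrM.
  have := normr_ge0 a; have := normr_ge0 b; have := normr_ge0 c; have := normr_ge0 d. nra.
have := h (A i0 i0) (A i0 i1) _ _ (hx' i0) (hx' i1).
have := h (A i1 i0) (A i1 i1) _ _ (hx' i0) (hx' i1).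
lra.
Qed.
Definition Pv (v : 'cV[R]_2) : 'M[R]_2 :=
  \matrix_(i < 2, j < 2) if j == i0 then v i ord0 else (if i == i0 then - v i1 ord0 else v i0 ord0).

Lemma PvE v : [/\ Pv v i0 i0 = v i0 ord0, Pv v i1 i0 = v i1 ord0,
  Pv v i0 i1 = - v i1 ord0 & Pv v i1 i1 = v i0 ord0].
Proof. by rewrite !mxE. Qed.

Lemma Pv_unit v : v != 0 -> Pv v \in unitmx.
Proof.
move=> hv; apply: unit_det; rewrite det2; have [-> -> -> ->] := PvE v.
apply/eqP => h.
have h0 : v i0 ord0 = 0 by have := sqr_ge0 (v i0 ord0); have := sqr_ge0 (v i1 ord0); nra.
have h1 : v i1 ord0 = 0 by have := sqr_ge0 (v i0 ord0); have := sqr_ge0 (v i1 ord0); nra.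
move/eqP: hv; apply; apply/matrixP => i j.
have -> : j = ord0 by apply/val_inj; case: j => [[]].
by rewrite mxE; case: (i2_cases i) => ->.
Qed.

Lemma Pv_conj (A : 'M[R]_2) v l : v != 0 -> A *m v = l *: v ->
  (invmx (Pv v) *m A *m Pv v) i1 i0 = 0 /\ (invmx (Pv v) *m A *m Pv v) i0 i0 = l.
Proof.
move=> hv hA.
have hP := Pv_unit _ hv.
have eAP : forall i, (A *m Pv v) i i0 = l * Pv v i i0.
  move=> i; have := congr1 (fun M : 'cV[R]_2 => M i ord0) hA; rewrite /= mulE mxE.
  have [p00 p10 _ _] := PvE v.
  by rewrite mulE p00 p10 [Pv v i i0]mxE eqxx.
have e : forall i, (invmx (Pv v) *m A *m Pv v) i i0 = l * (1%:M : 'M[R]_2) i i0.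
  move=> i; rewrite -mulmxA mulE !eAP -(mulVmx hP) mulE. ring.
by rewrite !e !mxE /= mulr0 mulr1.
Qed.

Definition Sw : 'M[R]_2 := \matrix_(i < 2, j < 2) if i == j then 0 else 1.

Lemma SwE : [/\ Sw i0 i0 = 0, Sw i0 i1 = 1, Sw i1 i0 = 1 & Sw i1 i1 = 0].
Proof. by rewrite !mxE. Qed.

Lemma SwSw : Sw *m Sw = 1%:M.
Proof. have [a b c d] := SwE. apply: mx2P; rewrite !mulE ?a ?b ?c ?d !mxE /=; lra. Qed.
Lemma main_aux (A : 'I_N -> 'M[R]_2) :
  (0 < N)%N ->
  (forall i, A i \in unitmx) ->
  dominated A ->
  reducible A ->
  (forall i, opnorm (A i) < 1) ->
  ~ (exists L : 'M[R]_2, XF A = [set L]) ->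
  (exists P : 'M[R]_2, P \in unitmx /\
     forall i, let B := invmx P *m A i *m P in
       B i1 i0 = 0 /\ 0 < `|B i1 i1| /\ `|B i1 i1| < `|B i0 i0| /\ `|B i0 i0| < 1)
  /\ ~ (exists Q : 'M[R]_2, Q \in unitmx /\
          forall i, is_diag_mx (invmx Q *m A i *m Q)).
Proof.
move=> hN hA hdom [v [v0 hv]] hnorm hXF.
set P := Pv v.
have hP : P \in unitmx := Pv_unit v v0.
have hut : forall i, ut (invmx P *m A i *m P).
  by move=> i; have [l hl] := hv i; have [h _] := Pv_conj (A i) v l v0 hl.
case: (dom_sign A P hP hA hut hdom) => [hgt|hlt]; last first.
  by exfalso; apply: hXF; exact: (XF_single A P hN hP hA hut hlt).
split.
  exists P; split => // i /=.
  have [l hl] := hv i; have [h10 h00] := Pv_conj (A i) v l v0 hl.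
  have [_ n11] := B_nz A P i hP (hA i) (hut i).
  split => //; split; first by rewrite normr_gt0.
  split; first exact: hgt.
  rewrite h00.
  have vp : 0 < vnorm v.
    rewrite /vnorm sqrtr_gt0.
    have := Pv_unit v v0; rewrite unitmxE unitfE det2; have [-> -> -> ->] := PvE v.
    move=> hne. have := sqr_ge0 (v i0 ord0); have := sqr_ge0 (v i1 ord0).
    have : v i0 ord0 * v i0 ord0 - - v i1 ord0 * v i1 ord0 != 0 := hne.
    move=> /eqP hne' a b. rewrite lt_neqAle; apply/andP; split; last lra.
    apply/eqP => e; apply: hne'. rewrite !expr2 in e. lra.
  set u := (vnorm v)^-1 *: v.
  have hu : vnorm u = 1 by rewrite vnorm_scale ger0_norm ?invr_ge0 ?(ltW vp) // mulVf // lt0r_neq0.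
  have hAu : A i *m u = l *: u by rewrite /u -scalemxAr hl !scalerA mulrC.
  exact: le_lt_trans (eig_le (A i) u l hu hAu) (hnorm i).
move=> [Q [hQ hdiag]].
have hd10 : forall i, (invmx Q *m A i *m Q) i1 i0 = 0 by move=> i; apply/is_diag_mxP.
have hd01 : forall i, (invmx Q *m A i *m Q) i0 i1 = 0 by move=> i; apply/is_diag_mxP.
case: (dom_sign A Q hQ hA hd10 hdom) => [hgtQ|hltQ]; last first.
  by apply: hXF; exact: (XF_single A Q hN hQ hA hd10 hltQ).
set Q' := Q *m Sw.
have hS : (Sw : 'M[R]_2) \in unitmx.
  apply: unit_det; rewrite det2; have [-> -> -> ->] := SwE. apply/eqP; lra.
have hQ' : Q' \in unitmx by rewrite /Q' unitmx_mul hQ hS.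
have iQ' : invmx Q' = Sw *m invmx Q.
  apply: inv_uniq; rewrite /Q' -mulmxA (mulmxA Sw) SwSw mul1mx mulmxV //.
have eB : forall i, invmx Q' *m A i *m Q' = Sw *m (invmx Q *m A i *m Q) *m Sw.
  by move=> i; rewrite iQ' /Q' !mulmxA.
have [s00 s01 s10 s11] := SwE.
have eE : forall i, [/\ (invmx Q' *m A i *m Q') i1 i0 = (invmx Q *m A i *m Q) i0 i1,
     (invmx Q' *m A i *m Q') i0 i0 = (invmx Q *m A i *m Q) i1 i1 &
     (invmx Q' *m A i *m Q') i1 i1 = (invmx Q *m A i *m Q) i0 i0].
  move=> i; rewrite eB !mulE s00 s01 s10 s11; split; ring.
apply: hXF; apply: (XF_single A Q' hN hQ' hA).
- by move=> i; rewrite /ut; have [-> _ _] := eE i.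
- by move=> i; have [_ -> ->] := eE i; exact: hgtQ.
Qed.

End S.

Theorem mainTheorem11 (R : realType) (N : nat) (A : 'I_N -> 'M[R]_2) :
  (0 < N)%N ->
  (forall i, A i \in unitmx) ->
  dominated A ->
  reducible A ->
  (forall i, opnorm (A i) < 1) ->
  ~ (exists L : 'M[R]_2, XF A = [set L]) ->
  (exists P : 'M[R]_2, P \in unitmx /\
     forall i, let B := invmx P *m A i *m P in
       B i1 i0 = 0 /\ 0 < `|B i1 i1| /\ `|B i1 i1| < `|B i0 i0| /\ `|B i0 i0| < 1)
  /\ ~ (exists Q : 'M[R]_2, Q \in unitmx /\
          forall i, is_diag_mx (invmx Q *m A i *m Q)).
Proof. exact: main_aux. Qed.
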